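(* Let $W_S(\theta_0,s)=\int_{\theta_0}^{\bar\theta}\big(\theta s(\theta)+v(\theta)\big)dF(\theta)$ for $\theta_0\in[0,\bar\theta)$ and $s\in\mathcal S(\theta_0)$ (social welfare with equal weights on revenue and consumer surplus, $\lambda=1$). Then $W_S$ is maximized over all such $(\theta_0,s)$ by $\theta_0=0$ and $s=F$ (full separation without exclusion).
   Context: Let $0<\bar\theta<\infty$, $\Theta=[0,\bar\theta]$, $F$ a cdf on $\Theta$ with continuous, strictly positive density $f$, $dF=f\,d\theta$. The intrinsic value $v:\Theta\to[0,\infty)$ is twice continuously differentiable with $v'\ge0$, $v''\le0$. For $\theta_0\in[0,\bar\theta)$ and bounded measurable $a,b$ on $[\theta_0,\bar\theta]$, write $b\in\mathrm{MPS}(a)$ if $\int_x^{\bar\theta}b\,dF\le\int_x^{\bar\theta}a\,dF$ for all $x\in[\theta_0,\bar\theta]$, with equality at $x=\theta_0$. $\mathcal S(\theta_0)$ is the set of nondecreasing $s:[\theta_0,\bar\theta]\to[0,1]$ with $s\in\mathrm{MPS}(F)$ on $[\theta_0,\bar\theta]$. *)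

(* Defs.v *)
From Stdlib Require Import Reals.
From Coquelicot Require Import Coquelicot.
Open Scope R_scope.

(* Integral against dF = f dθ over [a,b]. *)
Definition intF (f g : R -> R) (a b : R) : R := RInt (fun t => g t * f t) a b.

Definition MPS (f : R -> R) (thbar th0 : R) (a b : R -> R) : Prop :=
  (forall x, th0 <= x <= thbar -> intF f b x thbar <= intF f a x thbar) /\
  intF f b th0 thbar = intF f a th0 thbar.

Definition in_S (f F : R -> R) (thbar th0 : R) (s : R -> R) : Prop :=
  (forall x y, th0 <= x -> x <= y -> y <= thbar -> s x <= s y) /\
  (forall x, th0 <= x <= thbar -> 0 <= s x <= 1) /\
  MPS f thbar th0 F s.

Definition W_S (f v : R -> R) (thbar th0 : R) (s : R -> R) : R :=
  intF f (fun t => t * s t + v t) th0 thbar.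

(* Main.v *)
Require Import Defs.
From Stdlib Require Import Reals.
From Stdlib Require Import Lra ZArith IndefiniteDescription.
From Coquelicot Require Import Coquelicot.
From Stdlib Require Classical_Prop.
Open Scope R_scope.

Lemma quad_const (P : R -> R) (K : R) :
  0 <= K -> (forall x y, Rabs (P x - P y) <= K * (x - y)^2) -> forall x y, P x = P y.
Proof.
  intros HK HP.
  assert (D : forall x, derivable_pt_lim P x 0).
  { intros x eps Heps.
    assert (Hd : 0 < eps / (K + 1)) by (apply Rdiv_lt_0_compat; lra).
    exists (mkposreal _ Hd). simpl. intros h Hh Hlt.
    specialize (HP (x + h) x).
    replace (x + h - x) with h in HP by ring.
    rewrite Rminus_0_r.
    unfold Rdiv. rewrite Rabs_mult, Rabs_inv.
    assert (Ha : 0 < Rabs h) by (apply Rabs_pos_lt; auto).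
    apply Rle_lt_trans with (K * h^2 * / Rabs h).
    { apply Rmult_le_compat_r. left; apply Rinv_0_lt_compat; auto. auto. }
    replace (K * h^2 * / Rabs h) with (K * Rabs h).
    2:{ replace (h^2) with (Rabs h * Rabs h).
        field. lra. rewrite <- Rabs_mult. rewrite Rabs_right. ring.
        replace (h*h) with (h^2) by ring. apply Rle_ge, pow2_ge_0. }
    apply Rle_lt_trans with (K * (eps / (K+1))).
    { apply Rmult_le_compat_l; lra. }
    unfold Rdiv. apply Rlt_le_trans with ((K+1) * (eps * / (K+1))).
    { apply Rmult_lt_compat_r. apply Rmult_lt_0_compat; [lra| apply Rinv_0_lt_compat; lra]. lra. }
    right. field. lra. }
  set (pr := fun x => exist (fun l => derivable_pt_lim P x l) 0 (D x) : derivable_pt P x).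
  apply (null_derivative_1 P pr). intros x. reflexivity.
Qed.

Lemma lip_cont (P : R -> R) (K : R) :
  0 <= K -> (forall x y, Rabs (P x - P y) <= K * Rabs (x - y)) -> forall x, continuous P x.
Proof.
  intros HK HP x. apply continuity_pt_filterlim.
  intros eps Heps.
  exists (eps / (K + 1)). split. apply Rdiv_lt_0_compat; lra.
  intros y [_ Hy]. simpl in *. unfold R_dist in *.
  apply Rle_lt_trans with (K * Rabs (y - x)). apply HP.
  apply Rle_lt_trans with (K * (eps / (K+1))).
  { apply Rmult_le_compat_l; lra. }
  apply Rlt_le_trans with ((K+1) * (eps / (K+1))).
  { apply Rmult_lt_compat_r. apply Rdiv_lt_0_compat; lra. lra. }
  right. field. lra.
Qed.

Definition cut (a b : R) (G : R -> R) (t : R) : R :=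
  if Rle_dec a t then if Rle_dec t b then G t else 0 else 0.

Lemma cut_ex (a b : R) G : a <= b -> ex_RInt G a b -> ex_RInt (cut a b G) a b.
Proof.
  intros Hab H. apply ex_RInt_ext with G; auto.
  intros x Hx. rewrite Rmin_left, Rmax_right in Hx by lra.
  unfold cut. destruct (Rle_dec a x); [|lra]. destruct (Rle_dec x b); lra.
Qed.

Lemma unif_lim (G : R -> R) a b : a <= b ->
  (forall eps, 0 < eps -> exists H, ex_RInt H a b /\
      forall t, a <= t <= b -> Rabs (H t - G t) <= eps) ->
  ex_RInt G a b.
Proof.
  intros Hab Happ.
  assert (Hn : forall n : nat, exists H, ex_RInt H a b /\
      forall t, a <= t <= b -> Rabs (H t - G t) <= / (INR n + 1)).
  { intros n. apply Happ. apply Rinv_0_lt_compat. pose proof (pos_INR n). lra. }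
  set (Hs := fun n => proj1_sig (constructive_indefinite_description _ (Hn n))).
  assert (HsP : forall n, ex_RInt (Hs n) a b /\
      forall t, a <= t <= b -> Rabs (Hs n t - G t) <= / (INR n + 1)).
  { intros n. unfold Hs. destruct (constructive_indefinite_description _ (Hn n)). auto. }
  destruct (filterlim_RInt (fun n => cut a b (Hs n)) a b eventually _
     (cut a b G) (fun n => RInt (cut a b (Hs n)) a b)) as [If [_ HI]].
  - intros n. apply RInt_correct. apply cut_ex; auto. apply HsP.
  - apply filterlim_locally. intros eps.
    destruct (archimed (/ eps)) as [Hup _].
    assert (He : 0 < eps) by apply cond_pos.
    exists (Z.to_nat (up (/ eps))). intros n Hn'.
    intros t. unfold ball; simpl. unfold AbsRing_ball, abs, minus, plus, opp; simpl.
    unfold cut. destruct (Rle_dec a t); destruct (Rle_dec t b).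
    + apply Rle_lt_trans with (/ (INR n + 1)).
      { apply HsP. lra. }
      assert (Hi : / eps < INR n + 1).
      { apply le_INR in Hn'. rewrite INR_IZR_INZ in Hn'.
        rewrite Z2Nat.id in Hn'.
        - lra.
        - apply le_IZR. pose proof (Rinv_0_lt_compat _ He). lra. }
      rewrite <- (Rinv_inv eps). apply Rinv_lt_contravar; auto.
      apply Rmult_lt_0_compat. apply Rinv_0_lt_compat; auto. pose proof (pos_INR n); lra.
    + rewrite Rplus_opp_r, Rabs_R0; auto.
    + rewrite Rplus_opp_r, Rabs_R0; auto.
    + rewrite Rplus_opp_r, Rabs_R0; auto.
  - apply ex_RInt_ext with (cut a b G).
    + intros x Hx. rewrite Rmin_left, Rmax_right in Hx by lra.
      unfold cut. destruct (Rle_dec a x); [|lra]. destruct (Rle_dec x b); lra.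
    + exists If; auto.
Qed.

Lemma ind_int (s g : R -> R) a b c : a <= b ->
  (forall x y, a <= x -> x <= y -> y <= b -> s x <= s y) ->
  (forall x y, a <= x -> x <= y -> y <= b -> ex_RInt g x y) ->
  ex_RInt (fun t => if Rle_dec c (s t) then g t else 0) a b.
Proof.
  intros Hab Hs Hg.
  set (E := fun t => t = a \/ (a <= t <= b /\ s t < c)).
  destruct (completeness E) as [m [Hub Hlub]].
  - exists b. intros t [->|[H1 _]]; lra.
  - exists a. left; auto.
  assert (Ham : a <= m) by (apply Hub; left; auto).
  assert (Hmb : m <= b) by (apply Hlub; intros t [->|[H1 _]]; lra).
  apply ex_RInt_Chasles with m.
  - apply ex_RInt_ext with (fun _ => 0).
    + intros x Hx. rewrite Rmin_left, Rmax_right in Hx by lra.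
      destruct (Rle_dec c (s x)); auto.
      exfalso.
      destruct (Rle_lt_dec m x) as [Hmx|Hxm]; [lra|].
      destruct (Classical_Prop.classic (exists e, E e /\ x < e)) as [[e [[He|[He1 He2]] Hxe]]|Hn].
      * lra.
      * assert (s x <= s e) by (apply Hs; lra). lra.
      * assert (m <= x). { apply Hlub. intros t Ht. apply Rnot_lt_le. intros Hlt. apply Hn. exists t; auto. }
        lra.
    + apply ex_RInt_const.
  - apply ex_RInt_ext with g.
    + intros x Hx. rewrite Rmin_left, Rmax_right in Hx by lra.
      destruct (Rle_dec c (s x)); auto.
      exfalso. assert (x <= m) by (apply Hub; right; split; lra). lra.
    + apply Hg; lra.
Qed.

Fixpoint Acnt (s : R -> R) (m : nat) (t : R) : R :=
  match m with
  | O => 0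
  | S m' => Acnt s m' t + if Rle_dec (INR (S m')) (s t) then 1 else 0
  end.

Lemma Acnt_S s m t : Acnt s (S m) t = Acnt s m t + if Rle_dec (INR (S m)) (s t) then 1 else 0.
Proof. reflexivity. Qed.

Lemma Acnt_bound (s : R -> R) t : forall m : nat,
  Acnt s m t <= Rmax 0 (s t) /\ Acnt s m t <= INR m /\ (INR m <= Acnt s m t \/ s t - 1 < Acnt s m t).
Proof.
  induction m as [|m IH].
  - simpl. split; [apply Rmax_l|]. lra.
  - destruct IH as [I1 [I2 I3]]. rewrite Acnt_S.
    destruct (Rle_dec (INR (S m)) (s t)) as [Hc|Hc]; rewrite S_INR in *.
    + assert (Acnt s m t = INR m) by (destruct I3; lra).
      assert (0 <= INR m) by apply pos_INR.
      split; [|split]; try lra. apply Rle_trans with (s t). lra. apply Rmax_r.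
    + split; [lra|split]; [lra|]. right. destruct I3; lra.
Qed.

Lemma Acnt_int (s g : R -> R) a b : a <= b ->
  (forall x y, a <= x -> x <= y -> y <= b -> s x <= s y) ->
  (forall x y, a <= x -> x <= y -> y <= b -> ex_RInt g x y) ->
  forall m, ex_RInt (fun t => Acnt s m t * g t) a b.
Proof.
  intros Hab Hs Hg. induction m as [|m IH].
  - apply ex_RInt_ext with (fun _ => 0). intros; simpl; ring. apply ex_RInt_const.
  - apply ex_RInt_ext with (fun t => plus (Acnt s m t * g t)
        (if Rle_dec (INR (S m)) (s t) then g t else 0)).
    + intros x _. rewrite Acnt_S.
      destruct (Rle_dec (INR (S m)) (s x)); unfold plus; simpl; ring.
    + apply (ex_RInt_plus (fun t => Acnt s m t * g t) (fun t => if Rle_dec (INR (S m)) (s t) then g t else 0)); auto.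
      apply ind_int; auto.
Qed.

Lemma mono_int (s g : R -> R) a b : a <= b ->
  (forall x y, a <= x -> x <= y -> y <= b -> s x <= s y) ->
  (forall x, a <= x <= b -> 0 <= s x <= 1) ->
  (forall x, a <= x <= b -> continuous g x) ->
  ex_RInt (fun t => s t * g t) a b.
Proof.
  intros Hab Hs H01 Hgc.
  assert (Hg : forall x y, a <= x -> x <= y -> y <= b -> ex_RInt g x y).
  { intros x y H1 H2 H3. apply (ex_RInt_continuous (V:=R_CompleteNormedModule) g x y). intros z Hz.
    rewrite Rmin_left, Rmax_right in Hz by lra. apply Hgc; lra. }
  destruct (ex_RInt_ub g a b (Hg a b (Rle_refl _) Hab (Rle_refl _))) as [M HM].
  rewrite Rmin_left, Rmax_right in HM by lra.
  apply unif_lim; auto.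
  intros eps Heps.
  assert (HM0 : 0 <= M) by (apply Rle_trans with (norm (g a)); [apply norm_ge_0| apply HM; lra]).
  destruct (archimed (M / eps)) as [Hup _].
  set (n := Z.to_nat (up (M / eps))).
  assert (HnM : M / eps < INR n + 1).
  { unfold n. rewrite INR_IZR_INZ, Z2Nat.id. lra.
    apply le_IZR. assert (0 <= M/eps) by (apply Rdiv_le_0_compat; lra). lra. }
  set (N := INR n + 1).
  assert (HN : 0 < N) by (unfold N; pose proof (pos_INR n); lra).
  exists (fun t => / N * (Acnt (fun u => N * s u) (S n) t * g t)).
  split.
  - apply (ex_RInt_ext (fun t => scal (/ N) (Acnt (fun u => N * s u) (S n) t * g t))).
    { intros; reflexivity. }
    apply (ex_RInt_scal (fun t => Acnt (fun u => N * s u) (S n) t * g t)).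
    apply Acnt_int; [lra| |exact Hg].
    intros x y H1 H2 H3. apply Rmult_le_compat_l. lra. apply Hs; auto.
  - intros t Ht.
    destruct (Acnt_bound (fun u => N * s u) t (S n)) as [B1 [B2 B3]].
    cbv beta in *. rewrite S_INR in *. fold N in B2, B3.
    destruct (H01 t Ht) as [S0 S1].
    rewrite Rmax_right in B1 by (apply Rmult_le_pos; lra).
    assert (B4 : N * s t - 1 < Acnt (fun u => N * s u) (S n) t).
    { destruct B3; [|auto]. assert (N * s t <= N) by (rewrite <- Rmult_1_r; apply Rmult_le_compat_l; lra). lra. }
    set (A := Acnt (fun u => N * s u) (S n) t) in *.
    replace (/ N * (A * g t) - s t * g t) with ((A - N * s t) / N * g t) by (field; lra).
    rewrite Rabs_mult. 
    apply Rle_trans with (/ N * M).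
    + apply Rmult_le_compat; try apply Rabs_pos.
      * unfold Rdiv. rewrite Rabs_mult, Rabs_inv, (Rabs_right N) by lra.
        rewrite <- (Rmult_1_l (/ N)) at 2. apply Rmult_le_compat_r.
        left; apply Rinv_0_lt_compat; lra. apply Rabs_le; lra.
      * apply HM. auto.
    + apply Rle_trans with (/ (M / eps) * M).
      * destruct HM0 as [HM0|HM0].
        -- apply Rmult_le_compat_r; [lra|]. left. apply Rinv_lt_contravar; auto.
           apply Rmult_lt_0_compat; [apply Rdiv_lt_0_compat|]; lra.
        -- subst M. rewrite !Rmult_0_r. lra.
      * destruct HM0 as [HM0|HM0]. right. field. lra. subst M. 
        unfold Rdiv. rewrite Rmult_0_l, Rmult_0_r. lra.
Qed.


Lemma exC1 (f : R -> R) a b c : a <= b <= c -> ex_RInt f a c -> ex_RInt f a b.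
Proof. apply (ex_RInt_Chasles_1 (V:=R_CompleteNormedModule)). Qed.
Lemma exC2 (f : R -> R) a b c : a <= b <= c -> ex_RInt f a c -> ex_RInt f b c.
Proof. apply (ex_RInt_Chasles_2 (V:=R_CompleteNormedModule)). Qed.
Lemma RC (f : R -> R) a b c : ex_RInt f a b -> ex_RInt f b c -> RInt f a b + RInt f b c = RInt f a c.
Proof. apply (RInt_Chasles (V:=R_CompleteNormedModule)). Qed.
Lemma RS (f : R -> R) a b l : ex_RInt f a b -> RInt (fun x => l * f x) a b = l * RInt f a b.
Proof. apply (RInt_scal (V:=R_CompleteNormedModule)). Qed.
Lemma RM (f g : R -> R) a b : ex_RInt f a b -> ex_RInt g a b -> RInt (fun x => f x - g x) a b = RInt f a b - RInt g a b.
Proof. apply (RInt_minus (V:=R_CompleteNormedModule)). Qed.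
Lemma RPl (f g : R -> R) a b : ex_RInt f a b -> ex_RInt g a b -> RInt (fun x => f x + g x) a b = RInt f a b + RInt g a b.
Proof. apply (RInt_plus (V:=R_CompleteNormedModule)). Qed.
Lemma RP (f : R -> R) a : RInt f a a = 0.
Proof. apply (RInt_point (V:=R_CompleteNormedModule)). Qed.
Lemma RK a b (c : R) : RInt (fun _ => c) a b = (b - a) * c.
Proof. apply (RInt_const (V:=R_CompleteNormedModule)). Qed.
Lemma exM (f g : R -> R) a b : ex_RInt f a b -> ex_RInt g a b -> ex_RInt (fun x => f x - g x) a b.
Proof. apply (ex_RInt_minus (V:=R_NormedModule)). Qed.
Lemma exS (f : R -> R) a b l : ex_RInt f a b -> ex_RInt (fun x => l * f x) a b.
Proof. apply (ex_RInt_scal (V:=R_NormedModule)). Qed.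
Lemma exK a b (c : R) : ex_RInt (fun _ => c) a b.
Proof. apply (ex_RInt_const (V:=R_NormedModule)). Qed.
Lemma RE (f g : R -> R) a b : (forall x, Rmin a b < x < Rmax a b -> f x = g x) -> RInt f a b = RInt g a b.
Proof. apply (RInt_ext (V:=R_CompleteNormedModule)). Qed.
Lemma exE (f g : R -> R) a b : (forall x, Rmin a b < x < Rmax a b -> f x = g x) -> ex_RInt f a b -> ex_RInt g a b.
Proof. apply (ex_RInt_ext (V:=R_NormedModule)). Qed.

Definition clamp (a b x : R) := Rmax a (Rmin b x).

Lemma clamp_in a b x : a <= b -> a <= clamp a b x <= b.
Proof. intros. unfold clamp. split. apply Rmax_l. apply Rmax_lub; auto. apply Rmin_l. Qed.

Lemma clamp_id a b x : a <= x <= b -> clamp a b x = x.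
Proof. intros. unfold clamp. rewrite Rmin_right by lra. rewrite Rmax_right; lra. Qed.

Lemma clamp_lip a b x y : a <= b -> Rabs (clamp a b x - clamp a b y) <= Rabs (x - y).
Proof.
  intros. unfold clamp, Rmax, Rmin.
  repeat (destruct Rle_dec); apply Rabs_le; split;
  match goal with |- _ <= Rabs ?z => idtac | _ => idtac end;
  try (destruct (Rle_dec 0 (x - y)); [rewrite Rabs_right by lra | rewrite Rabs_left by lra]); lra.
Qed.

Lemma RInt_sub_lip (h : R -> R) a b M : a <= b -> ex_RInt h a b ->
  (forall t, a <= t <= b -> Rabs (h t) <= M) ->
  forall u v, a <= u <= v -> v <= b ->
  RInt h u b = RInt h u v + RInt h v b /\ Rabs (RInt h u v) <= M * (v - u).
Proof.
  intros Hab Hh HM u v Huv Hvb.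
  assert (Hub : ex_RInt h u b) by (apply exC2 with a; auto; lra).
  assert (Huv' : ex_RInt h u v) by (apply exC1 with b; auto; lra).
  assert (Hvb' : ex_RInt h v b) by (apply exC2 with u; auto; lra).
  split.
  - symmetry. apply (RC h u v b); auto.
  - rewrite Rmult_comm. apply abs_RInt_le_const; auto; try lra. intros; apply HM; lra.
Qed.

Lemma key (h : R -> R) a b M : a <= b ->
  ex_RInt h a b -> ex_RInt (fun t => t * h t) a b ->
  (forall t, a <= t <= b -> Rabs (h t) <= M) ->
  (forall x, a <= x <= b -> RInt h x b <= 0) ->
  RInt h a b = 0 ->
  RInt (fun t => t * h t) a b <= 0.
Proof.
  intros Hab Hh Hth HM Hneg H0.
  assert (HM0 : 0 <= M) by (apply Rle_trans with (Rabs (h a)); [apply Rabs_pos| apply HM; lra]).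
  set (H := (fun x => RInt h x b : R) : R -> R).
  set (Hc := (fun x => H (clamp a b x)) : R -> R).
  assert (HL : forall u v, a <= u <= b -> a <= v <= b -> Rabs (H u - H v) <= M * Rabs (u - v)).
  { assert (W : forall u v, a <= u <= v -> v <= b -> Rabs (H u - H v) <= M * Rabs (u - v)).
    { intros u v H1 H2. destruct (RInt_sub_lip h a b M Hab Hh HM u v H1 H2) as [E B].
      unfold H. rewrite E. unfold Rminus; rewrite Rplus_assoc, Rplus_opp_r, Rplus_0_r.
      rewrite (Rabs_left1 (u + - v)) by lra. replace (- (u + - v)) with (v - u) by ring. exact B. }
    intros u v Hu Hv. destruct (Rle_dec u v). apply W; lra.
    rewrite Rabs_minus_sym, (Rabs_minus_sym u). apply W; lra. }
  assert (HcL : forall x y, Rabs (Hc x - Hc y) <= M * Rabs (x - y)).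
  { intros x y. unfold Hc. eapply Rle_trans. apply HL; apply clamp_in; auto.
    apply Rmult_le_compat_l; auto. apply clamp_lip; auto. }
  assert (Hcc := lip_cont Hc M HM0 HcL).
  assert (HcI : forall u v, ex_RInt Hc u v).
  { intros u v. apply (ex_RInt_continuous (V:=R_CompleteNormedModule) Hc u v). intros; apply Hcc. }
  set (Psi := fun u => RInt (fun t => t * h t) u b - u * H u - RInt Hc u b).
  assert (Hbound : forall u v, a <= u <= v -> v <= b -> Rabs (Psi u - Psi v) <= 2 * M * (v - u)^2).
  { intros u v H1 H2.
    destruct (RInt_sub_lip h a b M Hab Hh HM u v H1 H2) as [E1 _].
    assert (Hthuv : ex_RInt (fun t => t * h t) u v) by
      (apply exC1 with b; [lra|]; apply exC2 with a; auto; lra).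
    assert (Hthvb : ex_RInt (fun t => t * h t) v b) by
      (apply exC2 with a; auto; lra).
    assert (Hhuv : ex_RInt h u v) by
      (apply exC1 with b; [lra|]; apply exC2 with a; auto; lra).
    assert (E2 : RInt (fun t => t * h t) u b = RInt (fun t => t * h t) u v + RInt (fun t => t * h t) v b)
      by (symmetry; apply (RC (fun t => t * h t) u v b); auto).
    assert (E3 : RInt Hc u b = RInt Hc u v + RInt Hc v b)
      by (symmetry; apply (RC Hc u v b); auto).
    assert (F1 : RInt (fun t => t * h t) u v - u * RInt h u v = RInt (fun t => (t - u) * h t) u v).
    { rewrite <- (RS h u v u Hhuv).
      rewrite <- (RM (fun t => t * h t) (fun t => u * h t) u v Hthuv); [|apply exS; auto].
      apply RE. intros; ring. }
    assert (F2 : (v - u) * H v - RInt Hc u v = RInt (fun t => H v - Hc t) u v).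
    { rewrite (RM (fun _ => H v) Hc u v); [| apply exK | auto].
      rewrite RK. reflexivity. }
    assert (B1 : Rabs (RInt (fun t => (t - u) * h t) u v) <= (v - u) * ((v - u) * M)).
    { apply abs_RInt_le_const; try lra.
      - apply exE with (fun t => t * h t - u * h t).
        intros; ring.
        apply exM; auto. apply exS; auto.
      - intros t Ht. rewrite Rabs_mult. apply Rmult_le_compat; try apply Rabs_pos.
        rewrite Rabs_right; lra. apply HM; lra. }
    assert (B2 : Rabs (RInt (fun t => H v - Hc t) u v) <= (v - u) * (M * (v - u))).
    { apply abs_RInt_le_const; try lra.
      - apply exM; auto. apply exK.
      - intros t Ht. unfold Hc. rewrite clamp_id by lra.
        eapply Rle_trans. apply HL; lra. apply Rmult_le_compat_l; auto.
        rewrite Rabs_right; lra. }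
    unfold Psi. fold (H u). replace (H u) with (RInt h u v + H v) by (unfold H; rewrite E1; ring).
    rewrite E2, E3.
    replace (RInt (fun t : R => t * h t) u v + RInt (fun t : R => t * h t) v b -
      u * (RInt h u v + H v) - (RInt Hc u v + RInt Hc v b) -
      (RInt (fun t : R => t * h t) v b - v * H v - RInt Hc v b))
      with ((RInt (fun t => t * h t) u v - u * RInt h u v) + ((v - u) * H v - RInt Hc u v)) by ring.
    rewrite F1, F2. eapply Rle_trans. apply Rabs_triang. lra. }
  assert (Hq : forall x y, Rabs (Psi (clamp a b x) - Psi (clamp a b y)) <= 2 * M * (x - y)^2).
  { intros x y.
    assert (Hx := clamp_in a b x Hab). assert (Hy := clamp_in a b y Hab).
    assert (Hl := clamp_lip a b x y Hab).
    set (cx := clamp a b x) in *. set (cy := clamp a b y) in *.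
    assert (Hsq : (cx - cy)^2 <= (x - y)^2).
    { rewrite <- (Rsqr_pow2 (cx - cy)), <- (Rsqr_pow2 (x - y)), (Rsqr_abs (cx - cy)), (Rsqr_abs (x - y)).
      apply Rsqr_incr_1; auto; apply Rabs_pos. }
    destruct (Rle_dec cx cy).
    - eapply Rle_trans. apply Hbound; lra.
      replace ((cy - cx)^2) with ((cx - cy)^2) by ring. apply Rmult_le_compat_l; lra.
    - rewrite Rabs_minus_sym. eapply Rle_trans. apply Hbound; lra.
      apply Rmult_le_compat_l; lra. }
  assert (Hconst := quad_const (fun x => Psi (clamp a b x)) (2 * M) ltac:(lra) Hq a b).
  simpl in Hconst. rewrite !clamp_id in Hconst by lra.
  unfold Psi, H in Hconst. rewrite !RP in Hconst. rewrite H0 in Hconst.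
  assert (Hle : RInt Hc a b <= 0).
  { assert (Z : RInt (fun _ => 0) a b = 0) by (rewrite RK, Rmult_0_r; reflexivity).
    rewrite <- Z.
    apply RInt_le; auto. apply exK. intros t Ht. unfold Hc. rewrite clamp_id by lra.
    apply Hneg; lra. }
  lra.
Qed.
Lemma cmul (f g : R -> R) x : continuous f x -> continuous g x -> continuous (fun t => f t * g t) x.
Proof. intros. apply (continuous_mult (K:=R_AbsRing) f g x); auto. Qed.
Lemma cid x : continuous (fun t : R => t) x.
Proof. apply continuous_id. Qed.

Theorem corollary2 (thbar : R) (f F v : R -> R) :
  0 < thbar ->
  (forall x, 0 <= x <= thbar -> continuous f x) ->
  (forall x, 0 <= x <= thbar -> 0 < f x) ->
  (forall x, 0 <= x <= thbar -> F x = RInt f 0 x) ->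
  RInt f 0 thbar = 1 ->
  (forall x, 0 <= x <= thbar -> 0 <= v x) ->
  (exists v1 v2 : R -> R,
      forall x, 0 <= x <= thbar ->
        is_derive v x (v1 x) /\ is_derive v1 x (v2 x) /\ continuous v2 x /\
        0 <= v1 x /\ v2 x <= 0) ->
  in_S f F thbar 0 F /\
  (forall (th0 : R) (s : R -> R), 0 <= th0 < thbar -> in_S f F thbar th0 s ->
     W_S f v thbar th0 s <= W_S f v thbar 0 F).
Proof.
  intros Hpos Hfc Hfp HF H1 Hv [v1 [v2 Hder]].
  set (b := thbar).
  assert (exf : forall u w, 0 <= u -> u <= w -> w <= b -> ex_RInt f u w).
  { intros u w H2 H3 H4. apply (ex_RInt_continuous (V:=R_CompleteNormedModule) f u w).
    intros z Hz. rewrite Rmin_left, Rmax_right in Hz by lra. apply Hfc. unfold b in *; lra. }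
  assert (Fmono : forall x y, 0 <= x -> x <= y -> y <= b -> F x <= F y).
  { intros x y H2 H3 H4. rewrite !HF by (unfold b in *; lra).
    assert (E1 : ex_RInt f 0 x) by (apply exf; lra).
    assert (E2 : ex_RInt f x y) by (apply exf; lra).
    rewrite <- (RC f 0 x y E1 E2).
    assert (0 <= RInt f x y). { apply RInt_ge_0; [lra | exact E2 |].
      intros t Ht. left. apply Hfp. unfold b in *; lra. }
    lra. }
  assert (F01 : forall x, 0 <= x <= b -> 0 <= F x <= 1).
  { intros x Hx. split.
    - rewrite HF by auto. apply RInt_ge_0; [lra| apply exf; lra |].
      intros t Ht. left. apply Hfp. unfold b in *; lra.
    - assert (Fb : F b = 1) by (unfold b; rewrite HF; [exact H1 | lra]).
      rewrite <- Fb. apply Fmono; lra. }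
  split.
  { split; [|split].
    - intros x y H2 H3 H4. apply Fmono; auto.
    - exact F01.
    - split. intros; lra. reflexivity. }
  intros th0 s Hth [Smono [S01 [Smps Seq]]].
  set (a := th0) in *.
  fold b in Smono, S01, Smps, Seq.
  assert (Hab : 0 <= a < b) by lra.
  assert (cf : forall x, 0 <= x <= b -> continuous f x) by exact Hfc.
  assert (ctf : forall x, 0 <= x <= b -> continuous (fun t => t * f t) x).
  { intros x Hx. apply (cmul (fun t => t) f). apply cid. apply cf; auto. }
  assert (cvf : forall x, 0 <= x <= b -> continuous (fun t => v t * f t) x).
  { intros x Hx. apply (cmul v f).
    - apply (ex_derive_continuous (K:=R_AbsRing) (V:=R_NormedModule) v x). exists (v1 x). apply Hder; auto.
    - apply cf; auto. }
  assert (Isf : forall x, a <= x <= b -> ex_RInt (fun t => s t * f t) x b).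
  { intros x Hx. apply mono_int; try lra.
    - intros; apply Smono; lra.
    - intros; apply S01; lra.
    - intros; apply cf; lra. }
  assert (IFf : forall x, 0 <= x <= b -> ex_RInt (fun t => F t * f t) x b).
  { intros x Hx. apply mono_int; try lra.
    - intros; apply Fmono; lra.
    - intros; apply F01; lra.
    - intros; apply cf; lra. }
  assert (Itsf : ex_RInt (fun t => t * s t * f t) a b).
  { apply exE with (fun t => s t * (t * f t)). intros; ring.
    apply mono_int; try lra.
    - intros; apply Smono; lra.
    - intros; apply S01; lra.
    - intros; apply ctf; lra. }
  assert (ItFf : forall x, 0 <= x <= b -> ex_RInt (fun t => t * F t * f t) x b).
  { intros x Hx. apply exE with (fun t => F t * (t * f t)). intros; ring.
    apply mono_int; try lra.
    - intros; apply Fmono; lra.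
    - intros; apply F01; lra.
    - intros; apply ctf; lra. }
  assert (Ivf : forall x y, 0 <= x -> x <= y -> y <= b -> ex_RInt (fun t => v t * f t) x y).
  { intros x y H2 H3 H4. apply (ex_RInt_continuous (V:=R_CompleteNormedModule) _ x y).
    intros z Hz. rewrite Rmin_left, Rmax_right in Hz by lra. apply cvf; lra. }
  assert (ItFf0 : forall x y, 0 <= x -> x <= y -> y <= b -> ex_RInt (fun t => t * F t * f t) x y).
  { intros x y H2 H3 H4. apply exC1 with b; [lra|]. apply ItFf; lra. }
  assert (WS : forall (w : R -> R) c, ex_RInt (fun t => t * w t * f t) c b -> ex_RInt (fun t => v t * f t) c b ->
     W_S f v b c w = RInt (fun t => t * w t * f t) c b + RInt (fun t => v t * f t) c b).
  { intros w c E1 E2. unfold W_S, intF.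
    rewrite <- (RPl (fun t => t * w t * f t) (fun t => v t * f t) c b E1 E2).
    apply RE. intros; ring. }
  unfold b in WS. fold b in WS.
  rewrite (WS s a Itsf (Ivf a b ltac:(lra) ltac:(lra) ltac:(lra))).
  rewrite (WS F 0 (ItFf 0 ltac:(lra)) (Ivf 0 b ltac:(lra) ltac:(lra) ltac:(lra))).
  set (h := fun t => s t * f t - F t * f t).
  assert (Ih : ex_RInt h a b) by (apply exM; [apply Isf | apply IFf]; lra).
  destruct (ex_RInt_ub h a b Ih) as [M HM].
  rewrite Rmin_left, Rmax_right in HM by lra.
  assert (Ki : RInt (fun t => t * h t) a b <= 0).
  { apply (key h a b M); try lra; auto.
    - apply exE with (fun t => t * s t * f t - t * F t * f t). intros; unfold h; ring.
      apply exM; auto. apply ItFf; lra.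
    - intros x Hx. unfold h. rewrite RM.
      + assert (T := Smps x Hx). unfold intF in T. lra.
      + apply Isf; lra.
      + apply IFf; lra.
    - unfold h. rewrite RM. unfold intF in Seq. rewrite Seq. apply Rminus_diag_eq. reflexivity.
      apply Isf; lra. apply IFf; lra. }
  assert (Di : RInt (fun t => t * h t) a b = RInt (fun t => t * s t * f t) a b - RInt (fun t => t * F t * f t) a b).
  { rewrite <- RM; auto. apply RE. intros; unfold h; ring. apply ItFf; lra. }
  assert (Kii : RInt (fun t => t * F t * f t) a b <= RInt (fun t => t * F t * f t) 0 b).
  { rewrite <- (RC (fun t => t * F t * f t) 0 a b) by (apply ItFf0; lra).
    assert (0 <= RInt (fun t => t * F t * f t) 0 a); [|lra].
    apply RInt_ge_0; [lra| apply ItFf0; lra|]. intros t Ht.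
    apply Rmult_le_pos. apply Rmult_le_pos. lra. apply F01; lra. left; apply Hfp; unfold b in *; lra. }
  assert (Kiii : RInt (fun t => v t * f t) a b <= RInt (fun t => v t * f t) 0 b).
  { rewrite <- (RC (fun t => v t * f t) 0 a b) by (apply Ivf; lra).
    assert (0 <= RInt (fun t => v t * f t) 0 a); [|lra].
    apply RInt_ge_0; [lra| apply Ivf; lra|]. intros t Ht.
    apply Rmult_le_pos. apply Hv; unfold b in *; lra. left; apply Hfp; unfold b in *; lra. }
  lra.
Qed.
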